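(* Fix a $C^0$-concept over $\mathbb{K}$. Let $E,F\in\mathcal{M}$, $U\subseteq E$ open, $f\colon U\to F$ of class $C^1$ and $x\in U$. Then $df(x)\colon E\to F$ is a $\mathbb{K}$-linear $C^0$-map.
   Context: Let $\mathbb{K}$ be a commutative ring with unit carrying a topology. A $C^0$-concept over $\mathbb{K}$ consists of: (a) a class $\mathcal{M}$ of topologized $\mathbb{K}$-modules with $\mathbb{K}\in\mathcal{M}$; (b) for $E,F\in\mathcal{M}$ and open $U\subseteq E$, a set $C^0(U,F)$ of continuous maps; (c) for $E_1,E_2\in\mathcal{M}$ a topology on $E_1\times E_2$ (not necessarily the product topology) making it a member of $\mathcal{M}$; subject to: (I.1) composites of $C^0$-maps are $C^0$, identities and inclusions of open subsets are $C^0$; (I.2) $x\mapsto rx+b$ is $C^0$; (I.3) $t\mapsto tv+x$ is $C^0$; (I.4) $\mathbb{K}^\times$ is open and inversion is $C^0$; (I.5) $C^0$ is local on open covers; (II.1) projections and $v\mapsto(v,y)$, $w\mapsto(x,w)$ are $C^0$; (II.2) $f_1\times f_2$ is $C^0$ for $C^0$-maps $f_i$; (II.3) diagonals are $C^0$; (II.4) exchange/associativity maps of products are $C^0$ both ways; (II.5) addition and scalar multiplication are $C^0$; (III) a $C^0$-map on open $U\subseteq\mathbb{K}$ is determined by its values on $U\cap\mathbb{K}^\times$. For open $U\subseteq E$, $U^{[1]}=\{(x,v,t)\in U\times E\times\mathbb{K}:x+tv\in U\}$; a $C^0$-map $f$ is $C^1$ if there is a $C^0$-map $f^{[1]}\colon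 U^{[1]}\to F$ with $f(x+tv)-f(x)=t\,f^{[1]}(x,v,t)$ for all $(x,v,t)\in U^{[1]}$ (unique), and $df(x)v:=f^{[1]}(x,v,0)$. *)

(* Defs.v *)
From HB Require Import structures.
From mathcomp Require Import all_boot all_order all_algebra.
Set Implicit Arguments. Unset Strict Implicit. Unset Printing Implicit Defensive.
Import GRing.Theory.
Local Open Scope ring_scope.

Definition is_topology (T : Type) (O : (T -> Prop) -> Prop) : Prop :=
  O (fun _ => True) /\ O (fun _ => False) /\
  (forall (I : Type) (A : I -> T -> Prop), (forall i, O (A i)) ->
     O (fun x => exists i, A i x)) /\
  (forall A B, O A -> O B -> O (fun x => A x /\ B x)).

Section TopMod.
Variable K : comUnitRingType.

(* A topologized K-module: a K-module with a family of open sets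
   (the topology axioms are imposed on members of the class M). *)
Record topmod := TopMod { tm_sort :> lmodType K; tm_open : (tm_sort -> Prop) -> Prop }.

Definition Ktop (TK : (K -> Prop) -> Prop) : topmod := @TopMod K^o TK.

(* E1 x E2 carrying a given (not necessarily product) topology. *)
Definition prodtop (E1 E2 : topmod) (O : ((E1 * E2)%type -> Prop) -> Prop) : topmod :=
  @TopMod (E1 * E2)%type O.

Definition cont_on (E F : topmod) (U : E -> Prop) (f : E -> F) : Prop :=
  forall V, tm_open V -> exists W, tm_open W /\
    (forall x, U x -> (W x <-> V (f x))).
End TopMod.

(* A C^0-concept over (K, TK).  Maps U -> F are encoded as total functions
   E -> F of which only the values on U matter (axiom c0_ext). *)
Record C0concept (K : comUnitRingType) (TK : (K -> Prop) -> Prop) := {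
  inM : topmod K -> Prop;
  C0 : forall E F : topmod K, (E -> Prop) -> (E -> F) -> Prop;
  ptop : forall E1 E2 : topmod K, ((E1 * E2)%type -> Prop) -> Prop;
  M_top : forall E, inM E -> is_topology (@tm_open K E);
  M_K : inM (Ktop TK);
  M_prod : forall E1 E2, inM E1 -> inM E2 -> inM (prodtop (@ptop E1 E2));
  C0_cont : forall E F U f, inM E -> inM F -> tm_open U -> @C0 E F U f -> cont_on U f;
  C0_ext : forall (E F : topmod K) (U : E -> Prop) (f g : E -> F), (forall x, U x -> f x = g x) ->
     C0 U f -> C0 U g;
  C0_comp : forall (E F G : topmod K) U V (f : E -> F) (g : F -> G),
     inM E -> inM F -> inM G -> tm_open U -> tm_open V ->
     (forall x, U x -> V (f x)) -> C0 U f -> C0 V g -> C0 U (fun x => g (f x));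
  C0_id_incl : forall (E : topmod K) (V : E -> Prop), inM E -> tm_open V ->
     @C0 E E V (fun x => x);
  C0_affine : forall (E : topmod K) (r : K) (b : E), inM E ->
     @C0 E E (fun _ => True) (fun x => r *: x + b);
  C0_line : forall (E : topmod K) (v x : E), inM E ->
     @C0 (Ktop TK) E (fun _ => True) (fun t : K^o => (t : K) *: v + x);
  units_open : TK (fun t : K => t \is a GRing.unit);
  C0_inv : @C0 (Ktop TK) (Ktop TK) (fun t : K^o => (t : K) \is a GRing.unit)
     (fun t : K^o => ((t : K)^-1 : K^o));
  C0_local : forall (E F : topmod K) (U : E -> Prop) (f : E -> F)
     (I : Type) (Ui : I -> E -> Prop), inM E -> inM F ->
     (forall i, tm_open (Ui i)) -> (forall x, U x <-> exists i, Ui i x) ->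
     (forall i, C0 (Ui i) f) -> C0 U f;
  C0_fst : forall E1 E2, inM E1 -> inM E2 ->
     @C0 (prodtop (@ptop E1 E2)) E1 (fun _ => True) fst;
  C0_snd : forall E1 E2, inM E1 -> inM E2 ->
     @C0 (prodtop (@ptop E1 E2)) E2 (fun _ => True) snd;
  C0_pairl : forall (E1 E2 : topmod K) (y : E2), inM E1 -> inM E2 ->
     @C0 E1 (prodtop (@ptop E1 E2)) (fun _ => True) (fun v => (v, y));
  C0_pairr : forall (E1 E2 : topmod K) (x : E1), inM E1 -> inM E2 ->
     @C0 E2 (prodtop (@ptop E1 E2)) (fun _ => True) (fun w => (x, w));
  C0_prodmap : forall (E1 E2 F1 F2 : topmod K) (U1 : E1 -> Prop) (U2 : E2 -> Prop)
     (f1 : E1 -> F1) (f2 : E2 -> F2),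
     inM E1 -> inM E2 -> inM F1 -> inM F2 -> tm_open U1 -> tm_open U2 ->
     C0 U1 f1 -> C0 U2 f2 ->
     @C0 (prodtop (@ptop E1 E2)) (prodtop (@ptop F1 F2))
       (fun p => U1 p.1 /\ U2 p.2) (fun p => (f1 p.1, f2 p.2));
  C0_diag : forall E : topmod K, inM E ->
     @C0 E (prodtop (@ptop E E)) (fun _ => True) (fun x => (x, x));
  C0_swap : forall E1 E2, inM E1 -> inM E2 ->
     @C0 (prodtop (@ptop E1 E2)) (prodtop (@ptop E2 E1)) (fun _ => True)
       (fun p => (p.2, p.1));
  C0_assoc : forall E1 E2 E3, inM E1 -> inM E2 -> inM E3 ->
     @C0 (prodtop (@ptop (prodtop (@ptop E1 E2)) E3)) (prodtop (@ptop E1 (prodtop (@ptop E2 E3))))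
       (fun _ => True) (fun p => (p.1.1, (p.1.2, p.2)));
  C0_assocV : forall E1 E2 E3, inM E1 -> inM E2 -> inM E3 ->
     @C0 (prodtop (@ptop E1 (prodtop (@ptop E2 E3)))) (prodtop (@ptop (prodtop (@ptop E1 E2)) E3))
       (fun _ => True) (fun p => ((p.1, p.2.1), p.2.2));
  C0_add : forall E : topmod K, inM E ->
     @C0 (prodtop (@ptop E E)) E (fun _ => True) (fun p => p.1 + p.2);
  C0_scale : forall E : topmod K, inM E ->
     @C0 (prodtop (@ptop (Ktop TK) E)) E (fun _ => True) (fun p => (p.1 : K) *: p.2);
  C0_det : forall (F : topmod K) (U : K^o -> Prop) (f g : K^o -> F), inM F ->
     TK U -> @C0 (Ktop TK) F U f -> @C0 (Ktop TK) F U g ->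
     (forall t, U t -> (t : K) \is a GRing.unit -> f t = g t) ->
     forall t, U t -> f t = g t
}.

Section C1.
Variables (K : comUnitRingType) (TK : (K -> Prop) -> Prop) (C : C0concept TK).

Definition triple (E : topmod K) : topmod K :=
  prodtop (@ptop _ _ C E (prodtop (@ptop _ _ C E (Ktop TK)))).

Definition U1 (E : topmod K) (U : E -> Prop) : triple E -> Prop :=
  fun p => U p.1 /\ U (p.1 + (p.2.2 : K) *: p.2.1).

Definition is_f1 (E F : topmod K) (U : E -> Prop) (f : E -> F) (f1 : triple E -> F) : Prop :=
  C0 C U f /\ @C0 _ _ C (triple E) F (U1 U) f1 /\
  forall p : triple E, U1 U p ->
    f (p.1 + (p.2.2 : K) *: p.2.1) - f p.1 = (p.2.2 : K) *: f1 p.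

Definition isC1 (E F : topmod K) (U : E -> Prop) (f : E -> F) : Prop :=
  exists f1, is_f1 U f f1.

Definition df (E F : topmod K) (f1 : triple E -> F) (x : E) : E -> F :=
  fun v => f1 (x, (v, (0 : K^o))).
End C1.

(* Main.v *)
Require Import Defs.
From HB Require Import structures.
From mathcomp Require Import all_boot all_order all_algebra.
From Stdlib Require Import FunctionalExtensionality PropExtensionality.
Local Open Scope ring_scope.
Import GRing.Theory.

Section Helpers.
Set Implicit Arguments. Unset Strict Implicit.
Variables (K : comUnitRingType) (TK : (K -> Prop) -> Prop) (C : C0concept TK).

Lemma openT (G : topmod K) : inM C G -> tm_open (fun _ : G => True).
Proof. by move=> /(@M_top _ _ C) [h _]. Qed.

Lemma openI (G : topmod K) (A B : G -> Prop) : inM C G ->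
  tm_open A -> tm_open B -> tm_open (fun x => A x /\ B x).
Proof. by move=> /(@M_top _ _ C) [_ [_ [_ h]]]; apply: h. Qed.

Lemma preim_open (G H : topmod K) (g : G -> H) (V : H -> Prop) :
  inM C G -> inM C H -> C0 C (fun _ => True) g -> tm_open V ->
  tm_open (fun y => V (g y)).
Proof.
move=> hG hH hg hV.
have [W [hW eq]] := C0_cont hG hH (openT hG) hg hV.
have -> : (fun y => V (g y)) = W; last by [].
apply: functional_extensionality => y; apply: propositional_extensionality.
by split => /(eq y I).
Qed.

Lemma restr (G H : topmod K) (W W' : G -> Prop) (g : G -> H) :
  inM C G -> inM C H -> tm_open W -> tm_open W' ->
  (forall y, W' y -> W y) -> C0 C W g -> C0 C W' g.
Proof.
move=> hG hH hW hW' sub hg.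
exact: (C0_comp (f := fun y => y) hG hG hH hW' hW sub (C0_id_incl hG hW') hg).
Qed.

Lemma pairC (G H1 H2 : topmod K) (W : G -> Prop) (g1 : G -> H1) (g2 : G -> H2) :
  inM C G -> inM C H1 -> inM C H2 -> tm_open W -> C0 C W g1 -> C0 C W g2 ->
  @C0 _ _ C G (prodtop (@ptop _ _ C H1 H2)) W (fun y => (g1 y, g2 y)).
Proof.
move=> hG h1 h2 hW c1 c2.
have hGG := M_prod hG hG.
have hHH := M_prod h1 h2.
have hd : @C0 _ _ C G (prodtop (@ptop _ _ C G G)) W (fun y => (y, y)).
  exact: (restr hG hGG (openT hG) hW (fun _ _ => I) (C0_diag hG)).
have hV : tm_open (fun p : prodtop (@ptop _ _ C G G) => W p.1 /\ W p.2).
  apply: openI => //.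
  - exact: (preim_open hGG hG (C0_fst hG hG) hW).
  - exact: (preim_open hGG hG (C0_snd hG hG) hW).
have := @C0_comp _ _ C G _ _ W _ (fun y : G => (y, y) : prodtop (@ptop _ _ C G G)) _ hG hGG hHH hW hV (fun y hy => conj hy hy) hd
          (C0_prodmap hG hG h1 h2 hW hW c1 c2).
done.
Qed.

Lemma constC (G H : topmod K) (c : H) : inM C G -> inM C H ->
  C0 C (fun _ => True) (fun _ : G => c).
Proof.
move=> hG hH.
have hGH := M_prod hG hH.
have := @C0_comp _ _ C G _ _ (fun _ => True) (fun _ => True)
  (fun y : G => (y, c) : prodtop (@ptop _ _ C G H)) _ hG hGH hH (openT hG) (openT hGH)
  (fun _ _ => I) (C0_pairl c hG hH) (C0_snd hG hH).
done.
Qed.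

Lemma cancel_unit (M : lmodType K) (t : K) (y z : M) :
  t \is a GRing.unit -> t *: y = t *: z -> y = z.
Proof.
move=> ht e.
by rewrite -[y]scale1r -(mulVr ht) -scalerA e scalerA mulVr // scale1r.
Qed.

End Helpers.

Theorem proposition2p2 (K : comUnitRingType) (TK : (K -> Prop) -> Prop)
  (C : C0concept TK) (E F : topmod K) (U : E -> Prop) (f : E -> F)
  (f1 : triple C E -> F) (x : E) :
  inM C E -> inM C F -> tm_open U -> is_f1 U f f1 -> U x ->
  (forall (a : K) (u v : E), df f1 x (a *: u + v) = a *: df f1 x u + df f1 x v) /\
  C0 C (fun _ : E => True) (df f1 x).
Proof.
move=> hE hF hU [cf [cf1 eqf1]] hx.
have hK : inM C (Ktop TK) := M_K C.
have hEK := M_prod hE hK.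
have hT : inM C (triple C E) := M_prod hE hEK.
have c2 : @C0 _ _ C (prodtop (@ptop _ _ C E (Ktop TK))) E (fun _ => True)
    (fun q => (q.2 : K) *: q.1).
  have hKE := M_prod hK hE.
  have := @C0_comp _ _ C _ _ E (fun _ => True) (fun _ => True)
    (fun q : prodtop (@ptop _ _ C E (Ktop TK)) => (q.2, q.1) : prodtop (@ptop _ _ C (Ktop TK) E)) _
    hEK hKE hE (openT hEK) (openT hKE) (fun _ _ => I) (C0_swap hE hK) (C0_scale hE).
  done.
have o1 := preim_open hT hE (C0_fst hE hEK) hU.
have hEE := M_prod hE hE.
have hTT : tm_open (fun p : triple C E => True /\ True) by exact: openI hT (openT hT) (openT hT).
have c3 : @C0 _ _ C (triple C E) E (fun _ => True)
    (fun p => p.1 + (p.2.2 : K) *: p.2.1).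
  have pm := C0_prodmap hE hEK hE hE (openT hE) (openT hEK) (C0_id_incl hE (openT hE)) c2.
  have := @C0_comp _ _ C (triple C E) _ E _ (fun _ => True)
    (fun p : triple C E => (p.1, (p.2.2 : K) *: p.2.1) : prodtop (@ptop _ _ C E E)) _
    hT hEE hE hTT (openT hEE) (fun _ _ => I) pm (C0_add hE).
  move=> h; exact: (restr hT hE hTT (openT hT) (fun _ _ => conj I I) h).
have o2 := preim_open hT hE c3 hU.
have hU1 : tm_open (U1 U) := openI hT o1 o2.
have trip : forall (e : K^o -> E) (w : E) (s : K^o -> K^o),
    @C0 _ _ C (Ktop TK) E (fun _ => True) e -> @C0 _ _ C (Ktop TK) (Ktop TK) (fun _ => True) s ->
    @C0 _ _ C (Ktop TK) (triple C E) (fun _ => True) (fun t => (e t, (w, s t))).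
  move=> e w s ce cs.
  apply: (pairC hK hE hEK (openT hK)) => //.
  apply: (pairC hK hE hK (openT hK)) => //.
  exact: constC.
have idK : @C0 _ _ C (Ktop TK) (Ktop TK) (fun _ => True) (fun t => t).
  exact: C0_id_incl hK (openT hK).
have cx : @C0 _ _ C (Ktop TK) E (fun _ => True) (fun _ => x) by exact: constC.
split; last first.
  have m : @C0 _ _ C E (triple C E) (fun _ => True) (fun v => (x, (v, (0 : K^o)))).
    apply: (pairC hE hE hEK (openT hE)); first exact: constC.
    apply: (pairC hE hE hK (openT hE)); first exact: (C0_id_incl hE (openT hE)).
    exact: constC.
  apply: (C0_comp hE hT hF (openT hE) hU1 _ m cf1).
  by move=> v _; rewrite /U1 /= scale0r addr0.
move=> a u v.
have s1 : @C0 _ _ C (Ktop TK) (Ktop TK) (fun _ => True) (fun t : K^o => (a * (t : K) : K^o)).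
  apply: (C0_ext _ (@C0_affine _ _ C (Ktop TK) a 0 hK)) => t _.
  by rewrite addr0.
have cl := @C0_line _ _ C E (a *: u) x hE.
have m0 := trip (fun _ => x) (a *: u + v) (fun t => t) cx idK.
have m1 := trip (fun _ => x) u _ cx s1.
have m2 := trip _ v (fun t => t) cl idK.
pose D := fun t : K^o => and (U1 (C:=C) U ((x, (a *: u + v, t)) : triple C E))
  (and (U1 (C:=C) U ((x, (u, (a * (t : K) : K^o))) : triple C E))
   (U1 (C:=C) U (((t : K) *: (a *: u) + x, (v, t)) : triple C E))).
have oD : TK D.
  exact: (openI hK (preim_open hK hT m0 hU1)
     (openI hK (preim_open hK hT m1 hU1) (preim_open hK hT m2 hU1))).
have compD : forall m : Ktop TK -> triple C E,
    C0 C (fun _ => True) m -> (forall t, D t -> U1 U (m t)) ->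
    @C0 _ _ C (Ktop TK) F D (fun t => f1 (m t)).
  move=> m cm sub.
  have cm' := restr hK hT (openT hK) oD (fun _ _ => I) cm.
  exact: (C0_comp hK hT hF oD hU1 sub cm' cf1).
have cphi := compD _ m0 (fun t ht => ht.1).
have c1 := compD _ m1 (fun t ht => ht.2.1).
have c2' := compD _ m2 (fun t ht => ht.2.2).
have cpsi1 := C0_comp hK hF hF oD (openT hF) (fun _ _ => I) c1 (@C0_affine _ _ C F a 0 hF).
have cp := pairC hK hF hF oD cpsi1 c2'.
have cpsi := C0_comp hK (M_prod hF hF) hF oD (openT (M_prod hF hF)) (fun _ _ => I) cp (C0_add hF).
have D0 : D 0.
  by rewrite /D /U1 /= !scale0r !add0r !addr0 !mulr0 scale0r addr0.
have := C0_det hF oD cphi cpsi _ D0.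
rewrite /df /= mulr0 scale0r add0r addr0 => -> //.
move=> t [h0 [h1 h2]] ht.
apply: (cancel_unit ht).
have e1 := eqf1 _ h0.
have e2 := eqf1 _ h1.
have e3 := eqf1 _ h2.
rewrite /= in e1 e2 e3.
rewrite addr0 scalerDr scalerA (mulrC t a) -e1 -e2 -e3.
have p1 : x + (a * t) *: u = t *: (a *: u) + x by rewrite scalerA mulrC addrC.
have p2 : t *: (a *: u) + x + t *: v = x + t *: (a *: u + v).
  by rewrite scalerDr addrA [x + _]addrC.
rewrite p1 p2.
by rewrite [in RHS]addrC addrA subrK.
Qed.
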